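(* Let $m$ and $n$ be positive integers and let $\alpha\in[0,1]$ be rational such that $\alpha nm$ is an integer. Let $E=(C,V)$ be an approval election with $m$ candidates, $n$ voters and $\mathrm{satr}(E)=\alpha$. If for each two candidates $c_j,c_k\in C$ we have $\big||A(c_j)|-|A(c_k)|\big|\le 1$, then $\mathrm{ehd}(E)$ is largest among all elections with $m$ candidates, $n$ voters and saturation $\alpha$.
   Context: An (approval) election is $E=(C,V)$ with $C=\{c_1,\dots,c_m\}$ and voters $V=(v_1,\dots,v_n)$, each vote a binary vector in $\{0,1\}^m$; $A(c)$ is the set of voters approving candidate $c$ and $A(v)$ the set of candidates approved by vote $v$. $\mathrm{satr}(E)=\frac{1}{nm}\sum_{v\in V}|A(v)|$. $\mathrm{ham}(u,v)=\sum_j|u[j]-v[j]|$, and $\mathrm{ehd}(E)=\sum_{u\in V}\sum_{v\in V}\mathrm{ham}(u,v)$ (over all ordered pairs of voters). *)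

(* Defs.v *)
From mathcomp Require Import all_boot all_order all_algebra.
Set Implicit Arguments. Unset Strict Implicit. Unset Printing Implicit Defensive.
Import Order.TTheory GRing.Theory Num.Theory.

(* An approval election with n voters and m candidates: E v j = true iff
   voter v approves candidate j. *)
Definition election (n m : nat) := {ffun 'I_n -> {ffun 'I_m -> bool}}.

Definition approvals_of_voter n m (E : election n m) (v : 'I_n) : nat :=
  #|[set j : 'I_m | E v j]|.

Definition approvals_of_cand n m (E : election n m) (c : 'I_m) : nat :=
  #|[set v : 'I_n | E v c]|.

Definition satr n m (E : election n m) : rat :=
  ((\sum_(v < n) approvals_of_voter E v)%:R / (n * m)%:R)%R.

Definition ham m (u w : {ffun 'I_m -> bool}) : nat :=
  \sum_(j < m) (u j != w j).

Definition ehd n m (E : election n m) : nat :=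
  \sum_(u < n) \sum_(w < n) ham (E u) (E w).

(* Main.v *)
Require Import Defs.
From mathcomp Require Import all_boot all_order all_algebra.
From mathcomp Require Import zify.
Import Order.TTheory GRing.Theory Num.Theory.

Lemma sum_bool_card (T : finType) (P : pred T) :
  (\sum_(i : T) (P i : nat))%N = #|[set i | P i]|.
Proof.
rewrite -sum1_card [RHS]big_mkcond /=; apply: eq_bigr => i _; rewrite inE.
by case: (P i).
Qed.

Lemma pair_count n (b : 'I_n -> bool) :
  (\sum_(u < n) \sum_(w < n) (b u != b w))%N =
  (2 * (#|[set u | b u]| * (n - #|[set u | b u]|)))%N.
Proof.
set a := #|[set u | b u]|.
have Hc : #|[set u | ~~ b u]| = (n - a)%N.
  have := cardsC [set u | b u]; rewrite card_ord.
  have -> : ~: [set u | b u] = [set u | ~~ b u].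
    by apply/setP => x; rewrite !inE.
  rewrite -/a; lia.
transitivity (\sum_(u < n) (if b u then (n - a) else a))%N.
  apply: eq_bigr => u _.
  rewrite (@sum_bool_card _ (fun w => b u != b w)).
  case: (b u).
    rewrite -Hc; apply: eq_card => x; rewrite !inE; by case: (b x).
  rewrite /a; apply: eq_card => x; rewrite !inE; by case: (b x).
rewrite (bigID b) /=.
rewrite (eq_bigr (fun _ => n - a)%N); last by move=> i ->.
rewrite [X in (_ + X)%N](eq_bigr (fun _ => a)); last by move=> i /negbTE ->.
rewrite !sum_nat_const.
have -> : #|[pred i | b i]| = a by rewrite /a cardsE.
have -> : #|[pred i | ~~ b i]| = (n - a)%N by rewrite -Hc cardsE.
lia.
Qed.

Lemma ehd_cand n m (E : election n m) :
  ehd E = (\sum_(j < m) 2 * (approvals_of_cand E j * (n - approvals_of_cand E j)))%N.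
Proof.
rewrite /ehd /ham.
transitivity (\sum_(j < m) \sum_(u < n) \sum_(w < n) (E u j != E w j))%N.
  under eq_bigr do rewrite exchange_big.
  by rewrite [LHS]exchange_big.
apply: eq_bigr => j _.
by rewrite (pair_count n (fun u => E u j)).
Qed.

Lemma voters_cands n m (E : election n m) :
  (\sum_(v < n) approvals_of_voter E v = \sum_(j < m) approvals_of_cand E j)%N.
Proof.
rewrite /approvals_of_voter /approvals_of_cand.
under eq_bigr do rewrite -(@sum_bool_card _ (fun j => E _ j)).
under [X in _ = X]eq_bigr do rewrite -(@sum_bool_card _ (fun v => E v _)).
by rewrite exchange_big.
Qed.

Lemma cand_le n m (E : election n m) j : (approvals_of_cand E j <= n)%N.
Proof.
by rewrite /approvals_of_cand; apply: leq_trans (max_card _) _; rewrite card_ord.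
Qed.

Lemma key (n m : nat) (a b : 'I_m -> nat) (q : int) :
  (forall j, a j <= n)%N -> (forall j, b j <= n)%N ->
  (forall j, (Posz (a j)) = q \/ (Posz (a j)) = (q + 1)%R) ->
  (\sum_j a j = \sum_j b j)%N ->
  (\sum_j 2 * (b j * (n - b j)) <= \sum_j 2 * (a j * (n - a j)))%N.
Proof.
move=> ha hb hq hs.
rewrite -lez_nat !(big_morph Posz PoszD (erefl (Posz 0))).
pose c : int := (2 * (Posz n) - 2 * (2 * q + 1))%R.
pose d : int := (2 * q * (q + 1))%R.
have E1 : forall x : 'I_m -> nat,
    (\sum_j (c * (Posz (x j)) + d) = c * (Posz (\sum_j x j)%N) + \sum_(j < m) d)%R.
  move=> x; rewrite big_split /= -mulr_sumr.
  by rewrite (big_morph Posz PoszD (erefl (Posz 0))).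
apply: (@le_trans _ _ (\sum_j (c * (Posz (b j)) + d))%R).
  apply: ler_sum => j _.
  have := hb j; rewrite /c /d.
  have hp : (0 <= (Posz (b j) - q) * (Posz (b j) - q - 1))%R.
    have [h|h] : ((Posz (b j)) <= q \/ q + 1 <= (Posz (b j)))%R by lia.
      by apply: mulr_le0; lia.
    by apply: mulr_ge0; lia.
  move: hp; set x := b j => hp hx.
  have -> : Posz (2 * (x * (n - x))) = (2 * Posz x * (Posz n - Posz x))%R.
    by rewrite !PoszM -subzn // mulrA.
  move: hp; generalize (Posz x) (Posz n) q => X N Q hp.
  lia.
rewrite E1 -hs -E1 le_eqVlt; apply/orP; left; apply/eqP; apply: eq_bigr => j _.
have := ha j; have := hq j; rewrite /c /d; set x := a j => hx hxn.
have -> : Posz (2 * (x * (n - x))) = (2 * Posz x * (Posz n - Posz x))%R.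
  by rewrite !PoszM -subzn // mulrA.
move: hx; generalize (Posz x) (Posz n) q => X N Q [] ->; lia.
Qed.

Theorem lemma3 (m n : nat) (alpha : rat) :
  (0 < m)%N -> (0 < n)%N ->
  (0 <= alpha <= 1)%R ->
  (alpha * (n * m)%:R)%R \is a Num.int ->
  forall E : election n m,
    satr E = alpha ->
    (forall j k : 'I_m,
        (`| (approvals_of_cand E j)%:Z - (approvals_of_cand E k)%:Z | <= 1)%R) ->
    forall E' : election n m, satr E' = alpha -> (ehd E' <= ehd E)%N.
Proof.
move=> m0 n0 _ _ E hE hbal E' hE'.
have hS : (\sum_(j < m) approvals_of_cand E j = \sum_(j < m) approvals_of_cand E' j)%N.
  rewrite -!voters_cands.
  move: hE; rewrite -hE' /satr => /(congr1 (fun x => x * (n * m)%:R)%R).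
  have hnm : ((n * m)%:R != 0 :> rat)%R.
    by rewrite pnatr_eq0 muln_eq0 negb_or -!lt0n m0 n0.
  rewrite !mulfVK //.
  by move/eqP; rewrite eqr_nat => /eqP.
set a := approvals_of_cand E in hbal *.
set b := approvals_of_cand E'.
rewrite !ehd_cand.
pose j0 := Ordinal m0.
have [q hq] : exists q : int, forall j, Posz (a j) = q \/ Posz (a j) = (q + 1)%R.
  case: (boolP [exists j, a j < a j0]%N).
    move/existsP => [j1 h1]; exists (Posz (a j1)) => k.
    have := hbal k j1; have := hbal k j0; have := hbal j1 j0; lia.
  rewrite negb_exists => /forallP h; exists (Posz (a j0)) => k.
  have := h k; have := hbal k j0; lia.
apply: (key n m a b q) => //.
- by move=> j; apply: cand_le.
- by move=> j; apply: cand_le.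
Qed.
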